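(* Fix a countable base $\mathcal{B}$ for the topology of $\mathbb{R}$. Let $\sigma$ be a strategy for \textsc{Bob} in $\mathsf{BM}_\mathrm{fin}(\mathbb{R})$, let $X\subseteq\mathbb{R}$ be a countable set and let $\mathcal{Y}$ be a countable family of nowhere dense subsets of $\mathbb{R}$. Then there exists a sequence $s=\langle\mathcal{A}_n:n\in\omega\rangle$ of finite collections of members of $\mathcal{B}$ (moves of \textsc{Alice}, compatible with $\sigma$) such that $\sigma*s$ is a closed nowhere dense subset of $\mathbb{R}$ disjoint from $X\cup\bigcup\mathcal{Y}$.
   Context: The game $\mathsf{BM}_\mathrm{fin}(\mathbb{R})$: \textsc{Alice} plays a non-empty open set $A_0$ (write $\mathcal{A}_0=\{A_0\}$); \textsc{Bob} plays a finite collection $\mathcal{B}_0$ of non-empty open subsets of $A_0$; in inning $n+1$, for each $B \in \mathcal{B}_n$ \textsc{Alice} plays a non-empty open set $A_B \subseteq B$, letting $\mathcal{A}_{n+1}=\{A_B : B\in\mathcal{B}_n\}$, and \textsc{Bob} plays a finite collection $\mathcal{B}_{n+1}$ of non-empty open subsets of $\bigcup\mathcal{A}_{n+1}$; \textsc{Bob} wins if $\bigcap_{n}\bigcup\mathcal{B}_n\neq\emptyset$. A strategy $\sigma$ for \textsc{Bob} assigns to each finite sequence $\langle\mathcal{A}_0,\dots,\mathcal{A}_n\rangle$ of \textsc{Alice}'s moves his answer $\sigma(\langle\mathcal{A}_0,\dots,\mathcal{A}_n\rangle)$. For such $\sigma$ and a sequence $s=\langle\mathcal{A}_n:n\in\omega\rangle$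 of \textsc{Alice}'s moves compatible with $\sigma$ (i.e. forming a legal play against $\sigma$), $\sigma*s=\bigcap_{n\in\omega}\bigcup\sigma(\langle\mathcal{A}_0,\dots,\mathcal{A}_n\rangle)$. *)

(* Defs.v *)
From mathcomp Require Import all_boot all_order all_algebra.
From mathcomp Require Import all_classical all_reals topology normedtype.
Set Implicit Arguments. Unset Strict Implicit. Unset Printing Implicit Defensive.
Import Order.TTheory GRing.Theory Num.Theory.
Import numFieldTopology.Exports numFieldNormedType.Exports.
Local Open Scope classical_set_scope.
Local Open Scope ring_scope.

Section BMfin.
Variable R : realType.

Definition coll := seq (set R).

Definition Ucoll (l : coll) : set R :=
  [set x | exists i, (i < size l)%N /\ nth set0 l i x].

Definition all_coll (P : set R -> Prop) (l : coll) : Prop :=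
  forall i, (i < size l)%N -> P (nth set0 l i).

Definition nonempty_open (U : set R) : Prop := open U /\ U !=set0.

(* A strategy for Bob: from the finite sequence of Alice's moves
   <A_0, ..., A_n> to Bob's answer B_n. *)
Definition strategy := seq coll -> coll.

(* h = <A_0,...,A_n> is a legal finite sequence of Alice's moves against sigma:
   A_0 = {a} with a non-empty open; and A_{k+1} = {A_B : B in B_k} where
   B_k = sigma <A_0..A_k>, with A_B a non-empty open subset of B
   (A_{k+1} is listed aligned with the list B_k). *)
Definition legal_hist (sigma : strategy) (h : seq coll) : Prop :=
  (0 < size h)%N /\
  (exists a, nth [::] h 0 = [:: a] /\ nonempty_open a) /\
  (forall k, (k.+1 < size h)%N ->
     let Bk := sigma (take k.+1 h) in
     let Ak1 := nth [::] h k.+1 in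
     size Ak1 = size Bk /\
     forall i, (i < size Bk)%N ->
       nonempty_open (nth set0 Ak1 i) /\ nth set0 Ak1 i `<=` nth set0 Bk i).

Definition bob_strategy (sigma : strategy) : Prop :=
  forall h, legal_hist sigma h ->
    all_coll (fun B => nonempty_open B /\ B `<=` Ucoll (last [::] h)) (sigma h).

Definition prefix (s : nat -> coll) (n : nat) : seq coll := mkseq s n.+1.

Definition compatible (sigma : strategy) (s : nat -> coll) : Prop :=
  forall n, legal_hist sigma (prefix s n).

Definition outcome (sigma : strategy) (s : nat -> coll) : set R :=
  \bigcap_n Ucoll (sigma (prefix s n)).

Definition nowhere_dense (A : set R) : Prop := interior (closure A) = set0.

Definition is_base (Bs : set (set R)) : Prop :=
  (forall b, Bs b -> open b) /\
  (forall U : set R, open U -> forall x, U x -> exists b, Bs b /\ b x /\ b `<=` U).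

End BMfin.

(* Main.v *)
Require Import Defs.
Set Warnings "-all".
From mathcomp Require Import all_boot all_order all_algebra.
From mathcomp Require Import all_classical all_reals topology normedtype.
Import Order.TTheory GRing.Theory Num.Theory.
Import numFieldTopology.Exports numFieldNormedType.Exports.
Local Open Scope classical_set_scope.

Section H.
Variable R : realType.

Lemma nd_sub (A Y : set R) : A `<=` Y -> nowhere_dense Y -> nowhere_dense A.
Proof.
move=> AY hY; rewrite /nowhere_dense -subset0 -hY.
exact: interiorS (closureS AY).
Qed.

Lemma nd_set1 (x : R) : nowhere_dense [set x].
Proof.
rewrite /nowhere_dense.
have cl : closed [set x] := @accessible_closed_set1 _ (hausdorff_accessible (@Rhausdorff R)) x.
rewrite -(closure_id _).1 // -subset0 => y /nbhs_ballP [e /= e0 he].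
have yx : y = x := he y (ballxx _ e0).
have : [set x] (y + e / 2)%R.
  apply: he; rewrite pseudo_metric_ball_norm /= opprD addrA subrr sub0r normrN.
  by rewrite ger0_norm ?divr_ge0 ?ltW // ltr_pdivrMr // ltr_pMr // ltr1n.
rewrite /= -yx => /eqP; rewrite -subr_eq0 addrC addKr => /eqP.
by move=> /eqP; rewrite mulf_eq0 invr_eq0 gt_eqF //= pnatr_eq0.
Qed.

Lemma avoid_nd (U Y : set R) : open U -> U !=set0 -> nowhere_dense Y ->
  open (U `\` closure Y) /\ (U `\` closure Y) !=set0.
Proof.
move=> oU [x Ux] hY; split.
  by apply: openI => //; apply: closed_openC; exact: closed_closure.
apply: contrapT => hne.
have UY : U `<=` closure Y.
  by move=> z Uz; apply: contrapT => nz; apply: hne; exists z.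
move: UY; rewrite open_subsetE // hY => /(_ x Ux); done.
Qed.

Lemma get_basic (Bs : set (set R)) : is_base Bs -> forall U : set R, open U -> U !=set0 ->
  exists b, Bs b /\ b !=set0 /\ closure b `<=` U.
Proof.
move=> [_ hB] U oU [x Ux].
have : nbhs x U by apply: open_nbhs_nbhs; split.
move=> /nbhs_ballP [e /= e0 he].
have e20 : (0 < e / 2)%R by rewrite divr_gt0.
have e2e : (e / 2 < e)%R by rewrite ltr_pdivrMr // ltr_pMr // ltr1n.
have [b [Bb [bx bsub]]] := hB _ (ball_open x (e / 2)) x (ballxx _ e20).
exists b; split => //; split; first by exists x.
move=> z /(closureS bsub) /(closed_ball_subset e20 e2e); exact: he.
Qed.

Lemma get_good (Bs : set (set R)) (Z1 Z2 Z3 : set R) : is_base Bs ->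
  nowhere_dense Z1 -> nowhere_dense Z2 -> nowhere_dense Z3 ->
  forall U : set R, open U -> U !=set0 ->
  exists b, Bs b /\ b !=set0 /\ closure b `<=` U /\
    (forall x, closure b x -> ~ Z1 x /\ ~ Z2 x /\ ~ Z3 x).
Proof.
move=> hB n1 n2 n3 U oU U0.
have [o1 ne1] := avoid_nd _ _ oU U0 n1.
have [o2 ne2] := avoid_nd _ _ o1 ne1 n2.
have [o3 ne3] := avoid_nd _ _ o2 ne2 n3.
have [b [Bb [b0 cb]]] := get_basic _ hB _ o3 ne3.
exists b; split => //; split => //; split.
  by move=> x /cb [[[]]].
move=> x /cb [[[_ h1] h2] h3]; split; last split.
- by move=> /subset_closure.
- by move=> /subset_closure.
- by move=> /subset_closure.
Qed.

Lemma closed_Ucl (l : coll R) :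
  closed [set x | exists i, (i < size l)%N /\ closure (nth set0 l i) x].
Proof.
elim: l => [|a l IH].
  rewrite (_ : [set x | _] = set0); first exact: closed0.
  by apply/seteqP; split => // x [i []].
rewrite (_ : [set x | _] = closure a `|` [set x | exists i, (i < size l)%N /\ closure (nth set0 l i) x]).
  by apply: closedU => //; exact: closed_closure.
apply/seteqP; split => x /=.
  by move=> [[|i] [hi cx]]; [left | right; exists i].
by move=> [cx | [i [hi cx]]]; [exists 0%N | exists i.+1].
Qed.
End H.

Lemma take_mkseq' T (f : nat -> T) m n : (m <= n)%N -> take m (mkseq f n) = mkseq f m.
Proof. by move=> mn; rewrite /mkseq -map_take take_iota (minn_idPl mn). Qed.


Section Main.
Variable R : realType.
Variables (Bs : set (set R)) (sigma : strategy R) (X : set R) (Ys : set (set R)).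
Variables (f : R -> nat) (g : set R -> nat).
Hypothesis hB : is_base Bs.
Hypothesis hsig : bob_strategy sigma.
Hypothesis finj : {in X &, injective f}.
Hypothesis ginj : {in Ys &, injective g}.
Hypothesis hY : forall Y, Ys Y -> nowhere_dense Y.
Variable a0 : set R.
Hypothesis Ba0 : Bs a0.
Hypothesis a0ne : a0 !=set0.

Definition Z1 k := [set x | X x /\ f x = k].
Definition Z2 k := [set x : R | exists q : rat, unpickle k = Some q /\ x = ratr q].
Definition Z3 k := [set x | exists Y, Ys Y /\ g Y = k /\ Y x].

Definition good k (B b : set R) := Bs b /\ b !=set0 /\ closure b `<=` B /\
    (forall x, closure b x -> ~ Z1 k x /\ ~ Z2 k x /\ ~ Z3 k x).

Definition choose k (B : set R) : set R :=
  match pselect (exists b, good k B b) with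
  | left H => proj1_sig (cid H)
  | right _ => set0 end.

Lemma nd_Z1 k : nowhere_dense (Z1 k).
Proof.
case: (pselect (exists x, Z1 k x)) => [[x0 [Xx0 fx0]] | nz].
  apply: (@nd_sub R _ [set x0]); last exact: nd_set1.
  move=> z [Xz fz] /=; apply: finj; rewrite ?inE //; by rewrite fz fx0.
apply: (@nd_sub R _ [set 0%R]); last exact: nd_set1.
by move=> z hz; exfalso; apply: nz; exists z.
Qed.

Lemma nd_Z2 k : nowhere_dense (Z2 k).
Proof.
case E: (unpickle k) => [q|].
  apply: (@nd_sub R _ [set ratr q]); last exact: nd_set1.
  by move=> z [q' [hq ->]] /=; move: hq; rewrite E => -[->].
apply: (@nd_sub R _ [set 0%R]); last exact: nd_set1.
by move=> z [q' [hq _]]; move: hq; rewrite E.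
Qed.

Lemma nd_Z3 k : nowhere_dense (Z3 k).
Proof.
case: (pselect (exists Y, Ys Y /\ g Y = k)) => [[Y0 [YY0 gY0]] | nz].
  apply: (@nd_sub R _ Y0); last exact: hY.
  move=> z [Y [YY [gY Yz]]]; have eY : Y = Y0.
    by apply: ginj; rewrite ?inE // gY gY0.
  by rewrite -eY.
apply: (@nd_sub R _ [set 0%R]); last exact: nd_set1.
by move=> z [Y [YY [gY _]]]; exfalso; apply: nz; exists Y.
Qed.

Lemma chooseP k B : open B -> B !=set0 -> good k B (choose k B).
Proof.
move=> oB B0; rewrite /choose; case: pselect => [H | nH].
  exact: (proj2_sig (cid H)).
exfalso; apply: nH; have [b hb] := get_good _ _ _ _ _ hB (nd_Z1 k) (nd_Z2 k) (nd_Z3 k) _ oB B0; by exists b.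
Qed.

Fixpoint hist n : seq (coll R) := match n with
  | 0 => [:: [:: a0]]
  | n'.+1 => rcons (hist n') (map (choose n') (sigma (hist n'))) end.

Definition s n := nth [::] (hist n) n.

Lemma size_hist n : size (hist n) = n.+1.
Proof. by elim: n => //= n IH; rewrite size_rcons IH. Qed.

Lemma nth_hist n m : (m <= n)%N -> nth [::] (hist n) m = s m.
Proof.
elim: n m => [|n IH] m hm; first by move: hm; rewrite leqn0 => /eqP ->.
case: (ltngtP m n.+1) hm => // [mn _ | -> _]; last by [].
by rewrite /= nth_rcons size_hist mn IH.
Qed.

Lemma prefix_hist n : Defs.prefix s n = hist n.
Proof.
apply: (@eq_from_nth _ [::]); first by rewrite size_mkseq size_hist.
move=> i; rewrite /Defs.prefix size_mkseq => hi; rewrite nth_mkseq // nth_hist //.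
Qed.

Lemma s_succ n : s n.+1 = map (choose n) (sigma (Defs.prefix s n)).
Proof. by rewrite prefix_hist /s /= nth_rcons size_hist ltnn eqxx. Qed.

Lemma legal n : legal_hist sigma (Defs.prefix s n).
Proof.
elim/ltn_ind: n => n IH.
rewrite /Defs.prefix.
split; first by rewrite size_mkseq.
split.
  exists a0; rewrite nth_mkseq //; split => //; split => //.
  exact: hB.1.
move=> k; rewrite size_mkseq ltnS => hk.
have hk' : (k.+1 <= n.+1)%N by rewrite ltnS ltnW.
cbv zeta; rewrite (@take_mkseq' _ s _ _ hk') (nth_mkseq _ _ (hk : k.+1 < n.+1)%N) s_succ size_map; split => // i hi.
rewrite (nth_map set0) //.
have := hsig _ (IH k hk) _ hi => -[[oBi Bi0] _].
have [Bb [b0 [cb _]]] := chooseP k _ oBi Bi0.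
split; last by move=> x /subset_closure /cb.
split => //; exact: hB.1.
Qed.

Definition C k := [set x | exists i, (i < size (s k.+1))%N /\ closure (nth set0 (s k.+1) i) x].

Lemma K_sub_C k : outcome sigma s `<=` C k.
Proof.
move=> x /(_ k.+1 I) [i [hi Bx]].
have := hsig _ (legal k.+1) _ hi => -[_ /(_ x Bx)].
rewrite /Defs.prefix -nth_last size_mkseq (nth_mkseq _ _ (ltnSn k.+1)) => -[j [hj Ax]].
by exists j; split => //; exact: subset_closure.
Qed.

Lemma C_sub k : C k `<=` Ucoll (sigma (Defs.prefix s k)) /\
   (forall x, C k x -> ~ Z1 k x /\ ~ Z2 k x /\ ~ Z3 k x).
Proof.
have H : forall x, C k x -> exists i, (i < size (sigma (Defs.prefix s k)))%N /\
   closure (choose k (nth set0 (sigma (Defs.prefix s k)) i)) x /\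
   good k (nth set0 (sigma (Defs.prefix s k)) i) (choose k (nth set0 (sigma (Defs.prefix s k)) i)).
  move=> x [i]; rewrite s_succ size_map => -[hi cx].
  rewrite (nth_map set0) // in cx.
  have := hsig _ (legal k) _ hi => -[[oBi Bi0] _].
  by exists i; split => //; split => //; exact: chooseP.
split.
  by move=> x /H [i [hi [cx [_ [_ [cb _]]]]]]; exists i; split => //; exact: cb.
by move=> x /H [i [hi [cx [_ [_ [_ hz]]]]]]; exact: hz.
Qed.

Lemma K_eq : outcome sigma s = \bigcap_k C k.
Proof.
apply/seteqP; split => x.
  by move=> hx k _; exact: K_sub_C.
by move=> hx k _; apply: (C_sub k).1; exact: hx.
Qed.

Lemma K_closed : closed (outcome sigma s).
Proof. by rewrite K_eq; apply: closed_bigI => k _; exact: closed_Ucl. Qed.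

Lemma K_avoid x : outcome sigma s x -> forall k, ~ Z1 k x /\ ~ Z2 k x /\ ~ Z3 k x.
Proof. by move=> hx k; apply: (C_sub k).2; exact: K_sub_C. Qed.

Lemma K_nd : nowhere_dense (outcome sigma s).
Proof.
rewrite /nowhere_dense -(closure_id _).1; last exact: K_closed.
rewrite -subset0 => x hx.
have [y [hy [q _ yq]]] := @dense_rat R _ (ex_intro _ x hx) (@open_interior _ (outcome sigma s)).
have := K_avoid _ (interior_subset hy) (pickle q) => -[_ [+ _]]; apply.
by exists q; rewrite pickleK.
Qed.


Lemma main_sec : exists s0 : nat -> coll R,
    (forall n, all_coll Bs (s0 n)) /\
    compatible sigma s0 /\
    closed (outcome sigma s0) /\
    nowhere_dense (outcome sigma s0) /\
    (forall x, outcome sigma s0 x -> ~ X x /\ (forall Y, Ys Y -> ~ Y x)).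
Proof.
exists s; split.
  case=> [|k] i hi.
    by move: hi; rewrite /s /=; case: i.
  move: hi; rewrite s_succ size_map => hi; rewrite (nth_map set0) //.
  have := hsig _ (legal k) _ hi => -[[oBi Bi0] _].
  by have [] := chooseP k _ oBi Bi0.
split; first exact: legal.
split; first exact: K_closed.
split; first exact: K_nd.
move=> x hx; split.
  by move=> Xx; have [+ _] := K_avoid _ hx (f x); apply.
by move=> Y YY Yx; have [_ [_ +]] := K_avoid _ hx (g Y); apply; exists Y.
Qed.
End Main.


Theorem lemma4p8 (R : realType) (Bs : set (set R)) (sigma : strategy R)
  (X : set R) (Ys : set (set R)) :
  countable Bs -> is_base Bs ->
  bob_strategy sigma ->
  countable X ->
  countable Ys -> (forall Y, Ys Y -> nowhere_dense Y) ->
  exists s : nat -> coll R,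
    (forall n, all_coll Bs (s n)) /\
    compatible sigma s /\
    closed (outcome sigma s) /\
    nowhere_dense (outcome sigma s) /\
    (forall x, outcome sigma s x -> ~ X x /\ (forall Y, Ys Y -> ~ Y x)).
Proof.
move=> _ hB hsig /countable_injP [f finj] /countable_injP [g ginj] hY.
have [a0 [Ba0 [a0ne _]]] := get_basic _ _ hB _ (@openT R) (ex_intro _ 0%R I).
exact: (main_sec _ _ _ _ _ _ _ hB hsig finj ginj hY _ Ba0 a0ne).
Qed.
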